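(* Let $A$ be a locally uniformly convex normed vector space over $\mathbb C$ and give $A^\vee$ the dual norm. Then on $\mathrm{Max}\,A$ the lower Vietoris topology coincides with the topology generated by the sets $\{V\in\mathrm{Max}\,A: d(\phi,F(V))>r\}$, $\phi\in A^\vee$, $r>0$.
   Context: $\mathrm{Max}\,A$ is the set of closed subspaces of $A$; its lower Vietoris topology is generated by $\{V:V\cap U\ne\emptyset\}$, $U\subset A$ open. $F(V)=\{\phi\in A^\vee:\phi|_V=0\}$ and $d$ is the distance in the dual norm. $A$ is locally uniformly convex if for all $a\in A$ and sequences $(a_n)$ in $A$, $\lim(2\|a\|^2+2\|a_n\|^2-\|a+a_n\|^2)=0$ implies $\lim\|a-a_n\|=0$. *)

(* Defs.v *)
From HB Require Import structures.
From mathcomp Require Import all_boot all_order all_algebra.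
From mathcomp Require Import complex.
From mathcomp Require Import all_classical all_reals all_analysis.
Import numFieldTopology.Exports numFieldNormedType.Exports.
Import Order.TTheory GRing.Theory Num.Theory.

Set Implicit Arguments.
Unset Strict Implicit.
Unset Printing Implicit Defensive.

Local Open Scope classical_set_scope.
Local Open Scope ring_scope.

Definition Cx (R : realType) : numClosedFieldType := R[i].

Definition is_topology (T : Type) (O : set (set T)) : Prop :=
  O setT /\
  (forall U V, O U -> O V -> O (U `&` V)) /\
  (forall F : set (set T), F `<=` O -> O (\bigcup_(U in F) U)).

Definition generated_topology (T : Type) (S : set (set T)) : set (set T) :=
  [set U | forall O, is_topology O -> S `<=` O -> O U].

Section Defs.
Variables (R : realType) (A : normedModType R[i]).

Definition locally_uniformly_convex : Prop :=
  forall (a : A) (u : nat -> A),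
    (fun n => (2 * `|a| ^+ 2 + 2 * `|u n| ^+ 2 - `|a + u n| ^+ 2 : Cx R))
      @ \oo --> (0 : Cx R) ->
    (fun n => (`|a - u n| : Cx R)) @ \oo --> (0 : Cx R).

Definition is_dual (phi : A -> Cx R) : Prop :=
  (forall a b : A, phi (a + b) = phi a + phi b) /\
  (forall (c : R[i]) (a : A), phi (c *: a) = c * phi a) /\
  continuous phi.

(* Dual norm (norms are real, so we take real parts to land in R). *)
Definition dual_norm (phi : A -> Cx R) : \bar R :=
  ereal_sup [set (complex.Re (`|phi a| : R[i]))%:E | a in [set a : A | `|a| <= 1]].

(* F(V) = annihilator of V in A^\vee. *)
Definition annihilator (V : set A) : set (A -> Cx R) :=
  [set psi | is_dual psi /\ (forall v, V v -> psi v = 0)].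

Definition dual_dist (phi : A -> Cx R) (W : set (A -> Cx R)) : \bar R :=
  ereal_inf [set dual_norm (fun a => phi a - psi a) | psi in W].

Definition closed_subspace (V : set A) : Prop :=
  closed V /\ V 0 /\
  (forall u v, V u -> V v -> V (u + v)) /\
  (forall (c : R[i]) u, V u -> V (c *: u)).

Definition MaxA := {V : set A | closed_subspace V}.

Definition lower_vietoris_subbasis : set (set MaxA) :=
  [set S | exists U : set A, open U /\
           S = [set V : MaxA | (proj1_sig V `&` U) !=set0]].

Definition dual_dist_subbasis : set (set MaxA) :=
  [set S | exists (phi : A -> Cx R) (r : R), is_dual phi /\ 0 < r /\
           S = [set V : MaxA | (r%:E < dual_dist phi (annihilator (proj1_sig V)))%E]].

End Defs.

(* Main.v *)
Require Import Defs.
From HB Require Import structures.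
From mathcomp Require Import all_boot all_order all_algebra.
From mathcomp Require Import complex.
From mathcomp Require Import all_classical all_reals all_analysis.
From mathcomp Require Import ring lra.
Import numFieldTopology.Exports numFieldNormedType.Exports.
Import Order.TTheory GRing.Theory Num.Theory.

Set Implicit Arguments.
Unset Strict Implicit.
Unset Printing Implicit Defensive.
Local Open Scope classical_set_scope.
Local Open Scope ring_scope.

Section Basics.
Variable R : realType.
Local Notation C := (R[i]).

Definition nr {V : normedZmodType C} (x : V) : R := complex.Re `|x|.

Lemma normE (V : normedZmodType C) (x : V) : `|x| = (nr x)%:C%C.
Proof. by rewrite /nr RRe_real // ger0_real. Qed.

Lemma nr_ge0 (V : normedZmodType C) (x : V) : 0 <= nr x.
Proof. by have := normr_ge0 x; rewrite normE ler0c. Qed.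

Lemma rCD (a b : R) : (a + b)%:C%C = (a%:C + b%:C)%C :> C.
Proof. by rewrite rmorphD. Qed.
Lemma rCM (a b : R) : (a * b)%:C%C = (a%:C * b%:C)%C :> C.
Proof. by rewrite rmorphM. Qed.
Lemma rCN (a : R) : (- a)%:C%C = - (a%:C)%C :> C.
Proof. by rewrite rmorphN. Qed.
Lemma rCB (a b : R) : (a - b)%:C%C = (a%:C - b%:C)%C :> C.
Proof. by rewrite rmorphB. Qed.

Lemma nrD (V : normedZmodType C) (x y : V) : nr (x + y) <= nr x + nr y.
Proof. by have := ler_normD x y; rewrite !normE -rCD lecR. Qed.

Lemma nrN (V : normedZmodType C) (x : V) : nr (- x) = nr x.
Proof. by rewrite /nr normrN. Qed.

Lemma nr0 (V : normedZmodType C) : nr (0 : V) = 0.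
Proof. by rewrite /nr normr0. Qed.

Lemma nr_eq0 (V : normedZmodType C) (x : V) : nr x = 0 -> x = 0.
Proof. by move=> h; apply/eqP; rewrite -normr_eq0 normE h. Qed.

Lemma nrZ (V : normedModType C) (k : C) (x : V) : nr (k *: x) = nr k * nr x.
Proof. by apply: complexI; rewrite -normE normrZ rCM -!normE. Qed.

Lemma nrM (x y : C) : nr (x * y) = nr x * nr y.
Proof. by apply: complexI; rewrite -normE normrM rCM -!normE. Qed.

Lemma nrC (a : R) : nr (a%:C%C : C) = `|a|.
Proof. by rewrite /nr normc_def /= expr0n /= addr0 sqrtr_sqr. Qed.

Lemma nr_ltE (V : normedZmodType C) (x : V) (e : C) : 0 < e ->
  (`|x| < e) = (nr x < complex.Re e).
Proof. by move=> e0; rewrite normE ltcE /= (ger0_Im (ltW e0)) eqxx. Qed.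

Lemma nr_leE (V : normedZmodType C) (x : V) (e : C) : 0 <= e ->
  (`|x| <= e) = (nr x <= complex.Re e).
Proof. by move=> e0; rewrite normE lecE /= (ger0_Im e0) eqxx. Qed.

Lemma Re_le_nr (z : C) : complex.Re z <= nr z.
Proof.
have := normc_ge_Re z; rewrite normE lecR => h.
exact: le_trans (ler_norm _) h.
Qed.

Lemma nrJ (z : C) : nr (z^*)%C = nr z.
Proof. by rewrite /nr normcJ. Qed.

Lemma unit_rot (z : C) : exists a : C, nr a = 1 /\ a * z = (nr z)%:C%C.
Proof.
have [->|z0] := eqVneq z 0.
  by exists 1; rewrite nr0 mulr0 /nr normr1.
have nz0 : nr z != 0 by apply/eqP => /nr_eq0; apply/eqP.
exists ((z^*)%C * ((nr z)^-1)%:C%C); split.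
  by rewrite nrM nrJ nrC ger0_norm ?invr_ge0 ?nr_ge0 // mulfV.
rewrite mulrAC -[X in X * _]mulrC -(sqr_normc z) normE.
by rewrite expr2 -mulrA -rCM mulfV // mulr1.
Qed.

End Basics.

Section RealHB.
Variables (R : realType) (A : normedModType R[i]) (c : R).
Hypothesis c0 : 0 <= c.

Definition rgraph (G : set (A * R)) : Prop :=
 [/\ G (0,0),
   (forall x y a b, G (x,a) -> G (y,b) -> G (x+y, a+b)),
   (forall (r : R) x a, G (x,a) -> G ((r%:C)%C *: x, r * a)),
   (forall x a b, G (x,a) -> G (x,b) -> a = b) &
   (forall x a, G (x,a) -> a <= c * nr x)].

Lemma scaleCK (s : R) (d : A) : s != 0 -> (s%:C)%C *: (((s^-1)%:C)%C *: d) = d.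
Proof. by move=> s0; rewrite scalerA -rCM mulfV // rmorph1 scale1r. Qed.

Lemma rgraphN G x a : rgraph G -> G (x,a) -> G (-x,-a).
Proof.
case=> _ _ Gs _ _ h; have := Gs (-1) _ _ h.
by rewrite rCN rmorph1 scaleN1r mulN1r.
Qed.

Definition ext (G : set (A * R)) x0 t0 : set (A * R) :=
  [set p | exists d b (s : R), G (d,b) /\ p = (d + (s%:C)%C *: x0, b + s * t0)].

Lemma ext_sub G x0 t0 : G `<=` ext G x0 t0.
Proof.
by case=> d b Gdb; exists d, b, 0; split => //; rewrite rmorph0 scale0r addr0 mul0r addr0.
Qed.

Lemma rgraph_ext G x0 : rgraph G -> ~ (exists a, G (x0,a)) ->
  exists t0, rgraph (ext G x0 t0).
Proof.
move=> rG nx0; have [G0 Gadd Gsc Gfun Gb] := rG.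
pose L := [set y | exists d b, G (d,b) /\ y = b - c * nr (d - x0)].
have ubL d' b' : G (d',b') -> ubound L (c * nr (d' + x0) - b').
  move=> Gd' y [d [b [Gdb ->]]].
  have h1 := Gb _ _ (Gadd _ _ _ _ Gdb Gd').
  have h2 : nr (d + d') <= nr (d - x0) + nr (d' + x0).
    by have := nrD (d - x0) (d' + x0); rewrite (addrC d' x0) addrA subrK.
  have h3 : c * nr (d + d') <= c * (nr (d - x0) + nr (d' + x0)).
    exact: ler_wpM2l.
  lra.
have L0 : L !=set0 by exists (0 - c * nr (0 - x0)), 0, 0.
have Lub : has_ubound L by exists (c * nr (0 + x0) - 0); exact: ubL.
pose t0 := sup L.
have T1 d b : G (d,b) -> b - c * nr (d - x0) <= t0.
  by move=> Gdb; apply: ub_le_sup => //; exists d, b.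
have T2 d b : G (d,b) -> t0 <= c * nr (d + x0) - b.
  by move=> Gdb; apply: ge_sup => //; exact: ubL.
exists t0; rewrite /ext; split.
- rewrite /=; exists 0, 0, 0; split => //; by rewrite rmorph0 scale0r !addr0 mul0r addr0.
- move=> _ _ _ _ [d1 [b1 [s1 [G1 [-> ->]]]]] [d2 [b2 [s2 [G2 [-> ->]]]]].
  exists (d1 + d2), (b1 + b2), (s1 + s2); split; first exact: Gadd.
  by rewrite rCD scalerDl mulrDl; congr (_, _); rewrite -!addrA; congr (_ + _);
     rewrite addrC -!addrA; congr (_ + _); rewrite addrC.
- move=> r _ _ [d [b [s [Gdb [-> ->]]]]].
  exists ((r%:C)%C *: d), (r * b), (r * s); split; first exact: Gsc.
  by rewrite scalerDr scalerA -rCM mulrDr mulrA.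
- move=> x a1 a2 [d1 [b1 [s1 [G1 [E1 ->]]]]] [d2 [b2 [s2 [G2 [E2 ->]]]]].
  rewrite E1 in E2; clear E1; have [ss|ss] := eqVneq s1 s2.
    subst s2; move/addIr: E2 => dd; subst d2; by rewrite (Gfun _ _ _ G1 G2).
  exfalso; apply: nx0.
  have s0 : s1 - s2 != 0 by rewrite subr_eq0.
  have Gd := Gadd _ _ _ _ G2 (rgraphN rG G1).
  exists ((s1 - s2)^-1 * (b2 + - b1)).
  have -> : x0 = (((s1 - s2)^-1)%:C)%C *: (d2 + - d1).
    apply: (@scalerI _ _ ((s1 - s2)%:C)%C); first by rewrite fmorph_eq0.
    rewrite scaleCK // rCB scalerBl.
    apply/eqP; rewrite eq_sym subr_eq; apply/eqP.
    by rewrite addrC addrA E2 addrK.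
  exact: Gsc.
- move=> _ _ [d [b [s [Gdb [-> ->]]]]].
  have [s0|sn0] := eqVneq s 0.
    by subst s; rewrite rmorph0 scale0r addr0 mul0r addr0; exact: Gb.
  have [sp|sn] := ltrP 0 s.
    have G' := Gsc (s^-1) _ _ Gdb.
    have h := T2 _ _ G'.
    have e1 : s * nr ((((s^-1)%:C)%C *: d) + x0) = nr (d + (s%:C)%C *: x0).
      by rewrite -[in RHS](scaleCK d sn0) -scalerDr nrZ nrC gtr0_norm.
    have h2 : s * t0 <= s * (c * nr ((((s^-1)%:C)%C *: d) + x0) - s^-1 * b).
      by rewrite ler_pM2l.
    move: h2; rewrite mulrBr mulrA (mulrC s c) -mulrA e1 mulrA mulfV // mul1r.
    lra.
  have sl : s < 0 by rewrite lt_neqAle sn0 sn.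
  pose sg := - s; have sgp : 0 < sg by rewrite /sg oppr_gt0.
  have sg0 : sg != 0 by rewrite gt_eqF.
  have G' := Gsc (sg^-1) _ _ Gdb.
  have h := T1 _ _ G'.
  have e1 : sg * nr ((((sg^-1)%:C)%C *: d) - x0) = nr (d + (s%:C)%C *: x0).
    rewrite -[in RHS](scaleCK d sg0) /sg rCN scaleNr -scalerN -scalerDr nrZ nrC.
    by rewrite ltr0_norm // [in RHS]addrC -[in RHS]opprB nrN.
  have h2 : sg * (sg^-1 * b - c * nr ((((sg^-1)%:C)%C *: d) - x0)) <= sg * t0.
    by rewrite ler_pM2l.
  move: h2; rewrite mulrBr mulrA mulfV // mul1r mulrA (mulrC sg c) -mulrA e1 /sg.
  lra.
Qed.

End RealHB.

Lemma real_HB (R : realType) (A : normedModType R[i]) (c : R) (G0 : set (A * R)) :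
  0 <= c -> rgraph c G0 -> exists u : A -> R,
  [/\ (forall x a, G0 (x,a) -> u x = a),
      (forall x y, u (x+y) = u x + u y),
      (forall (r:R) x, u ((r%:C)%C *: x) = r * u x) &
      (forall x, u x <= c * nr x)].
Proof.
move=> c0 rG0.
pose P := fun G : set (A*R) => G = set0 \/ (rgraph c G /\ G0 `<=` G).
have [M [PM Mmax]] : exists M, P M /\ forall B, M `<` B -> ~ P B.
  apply: Zorn_bigcup => F FP Ftot.
  case: (pselect (exists X p, F X /\ X p)); last first.
    move=> nex; left; apply/seteqP; split => // q [X FX Xq].
    by exfalso; apply: nex; exists X, q.
  case=> X [p [FX Xp]]; right.
  have good Y q : F Y -> Y q -> rgraph c Y /\ G0 `<=` Y.
    by move=> FY Yq; case: (FP _ FY) => // Y0; rewrite Y0 in Yq.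
  split; [split|].
  - by exists X => //; have [[] ] := good X p FX Xp.
  - move=> x y a b [X1 FX1 H1] [X2 FX2 H2].
    case: (Ftot X1 X2 FX1 FX2) => sub.
      exists X2 => //; have [[_ Ga _ _ _] _] := good _ _ FX2 H2.
      exact: Ga (sub _ H1) H2.
    exists X1 => //; have [[_ Ga _ _ _] _] := good _ _ FX1 H1.
    exact: Ga H1 (sub _ H2).
  - move=> r x a [X1 FX1 H1]; exists X1 => //.
    by have [[_ _ Gs _ _] _] := good _ _ FX1 H1; apply: Gs.
  - move=> x a b [X1 FX1 H1] [X2 FX2 H2].
    case: (Ftot X1 X2 FX1 FX2) => sub.
      have [[_ _ _ Gf _] _] := good _ _ FX2 H2; exact: Gf (sub _ H1) H2.
    have [[_ _ _ Gf _] _] := good _ _ FX1 H1; exact: Gf H1 (sub _ H2).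
  - move=> x a [X1 FX1 H1].
    by have [[_ _ _ _ Gb] _] := good _ _ FX1 H1; apply: Gb.
  - move=> q Gq; exists X => //.
    by have [_ h] := good X p FX Xp; apply: h.
have [rM G0M] : rgraph c M /\ G0 `<=` M.
  case: PM => // M0; exfalso; apply: (Mmax G0); last by right; split.
  rewrite M0; split; first exact: sub0set.
  by move=> /(_ (0,0)); case: rG0 => h _ _ _ _ /(_ h).
have full x : exists a, M (x,a).
  case: (pselect (exists a, M (x,a))) => // nx; exfalso.
  have [t0 rE] := rgraph_ext c0 rM nx.
  apply: (Mmax (ext M x t0)); last first.
    by right; split => //; apply: subset_trans G0M (@ext_sub _ _ _ _ _).
  split; first exact: ext_sub.
  move=> /(_ (x, t0)) H; apply: nx; exists t0; apply: H.
  by exists 0, 0, 1; split; [case: rM | rewrite rmorph1 scale1r !add0r mul1r].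
case: (choice full) => u hu.
have [M0 Madd Msc Mfun Mb] := rM.
exists u; split.
- by move=> x a /G0M h; exact: Mfun (hu x) h.
- by move=> x y; apply: Mfun (hu (x+y)) (Madd _ _ _ _ (hu x) (hu y)).
- by move=> r x; apply: Mfun (hu _) (Msc _ _ _ (hu x)).
- by move=> x; exact: Mb (hu x).
Qed.

Section ComplexHB.
Variables (R : realType) (A : normedModType R[i]).
Local Notation C := (R[i]).

Definition cgraph (c : R) (G : set (A * C)) : Prop :=
 [/\ G (0,0),
   (forall x y a b, G (x,a) -> G (y,b) -> G (x+y, a+b)),
   (forall (k : C) x z, G (x,z) -> G (k *: x, k * z)),
   (forall x a b, G (x,a) -> G (x,b) -> a = b) &
   (forall x z, G (x,z) -> nr z <= c * nr x)].

Lemma ReD (z w : C) : complex.Re (z + w) = complex.Re z + complex.Re w.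
Proof. by case: z w => [? ?] [? ?]. Qed.

Lemma ReRM (r : R) (z : C) : complex.Re ((r%:C)%C * z) = r * complex.Re z.
Proof. by case: z => a b /=; rewrite mul0r subr0. Qed.

Lemma ReiM (z : C) : complex.Re ('i%C * z) = - complex.Im z.
Proof. by case: z => a b /=; rewrite mul0r mul1r sub0r. Qed.

Lemma psi_Re (a b : R) : complex.Re ((a%:C)%C - 'i%C * (b%:C)%C) = a.
Proof. by rewrite /= mul0r mulr0 subr0 subr0. Qed.

Lemma complex_HB (c : R) (G0 : set (A * C)) :
  0 <= c -> cgraph c G0 -> exists psi : A -> Cx R,
  [/\ is_dual psi, (forall x z, G0 (x,z) -> psi x = z) &
      (forall x, nr (psi x : C) <= c * nr x)].
Proof.
move=> c0 [G00 Gadd Gsc Gfun Gb].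
pose G0r := [set p : A * R | exists z, G0 (p.1, z) /\ p.2 = complex.Re z].
have rG : rgraph c G0r.
  split.
  - by exists 0; split => //=.
  - move=> x y a b [z1 [h1 /= ->]] [z2 [h2 /= ->]].
    by exists (z1 + z2); split; [exact: Gadd | rewrite /= ReD].
  - move=> r x a [z [h /= ->]].
    by exists ((r%:C)%C * z); split; [exact: Gsc | rewrite /= ReRM].
  - by move=> x a b [z1 [h1 /= ->]] [z2 [h2 /= ->]]; rewrite (Gfun _ _ _ h1 h2).
  - move=> x a [z [h /= ->]]; exact: le_trans (Re_le_nr z) (Gb _ _ h).
have [u [uext uD uR ub]] := real_HB c0 rG.
have uN x : u (- x) = - u x.
  by have := uR (-1) x; rewrite rCN rmorph1 scaleN1r mulN1r.
pose psi x : C := (u x)%:C%C - 'i%C * (u ('i%C *: x))%:C%C.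
have psiD x y : psi (x + y) = psi x + psi y.
  by rewrite /psi scalerDr !uD !rCD; ring.
have psiR (r : R) x : psi ((r%:C)%C *: x) = (r%:C)%C * psi x.
  rewrite /psi uR.
  have -> : 'i%C *: ((r%:C)%C *: x) = (r%:C)%C *: ('i%C *: x) by rewrite !scalerA mulrC.
  rewrite uR !rCM; ring.
have psiI x : psi ('i%C *: x) = 'i%C * psi x.
  rewrite /psi scalerA -expr2 sqr_i scaleN1r uN rCN.
  rewrite mulrBr mulrA -expr2 sqr_i; ring.
have psiZ (k : C) x : psi (k *: x) = k * psi x.
  rewrite [k]complexE scalerDl -scalerA psiD psiR psiI psiR; ring.
have psiRe x : complex.Re (psi x) = u x by rewrite /psi psi_Re.
have psib x : nr (psi x) <= c * nr x.
  have [a [a1 ha]] := unit_rot (psi x).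
  have e1 : complex.Re (psi (a *: x)) = nr (psi x) by rewrite psiZ ha.
  by rewrite -e1 psiRe; apply: le_trans (ub _) _; rewrite nrZ a1 mul1r.
exists psi; split.
- split; first exact: psiD.
  split; first by move=> k y; have := psiZ k y; rewrite /psi /= => ->.
  move=> x; apply/cvgrPdist_lt => e e0.
  have eR : 0 < complex.Re e by move: e0; rewrite ltcE => /andP[].
  have c1 : 0 < c + 1 by lra.
  pose q := complex.Re e / (c + 1).
  have q0 : 0 < q by rewrite divr_gt0.
  have qE : q * (c + 1) = complex.Re e by rewrite divfK // gt_eqF.
  have dq : (0 : C) < (q%:C)%C by rewrite ltcR.
  near=> y.
  have hy : `|x - y| < (q%:C)%C.
    by near: y; apply: (@cvgr_dist_lt _ _ _ (nbhs x) _ id) => //.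
  have -> : psi x - psi y = psi (x - y) by rewrite -[in LHS](subrK y x) (psiD (x - y) y) addrK.
  rewrite nr_ltE //.
  move: hy; rewrite nr_ltE //= => hy.
  have := psib (x - y).
  have : c * nr (x - y) <= c * q by apply: ler_wpM2l => //; exact: ltW.
  nra.
- move=> x z h.
  have e1 : u x = complex.Re z by apply: uext; exists z.
  have e2 : u ('i%C *: x) = - complex.Im z.
    by rewrite -ReiM; apply: uext; exists ('i%C * z); split => //; exact: Gsc.
  by rewrite /psi e1 e2 rCN mulrN opprK [in RHS](complexE z).
- exact: psib.
Unshelve. all: by end_near.
Qed.

End ComplexHB.

Section Main.
Variables (R : realType) (A : normedModType R[i]).
Local Notation C := (R[i]).

Lemma dual0 (phi : A -> Cx R) : is_dual phi -> phi 0 = 0.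
Proof. by case=> _ [hZ _]; have := hZ 0 0; rewrite scale0r mul0r. Qed.

Lemma nr_le1 (a : A) : (`|a| <= 1) = (nr a <= 1).
Proof. by rewrite nr_leE ?ler01. Qed.

Lemma dual_norm_ge (phi : A -> Cx R) a : nr a <= 1 ->
  ((nr (phi a : C))%:E <= dual_norm phi)%E.
Proof. by move=> h; apply: ereal_sup_ubound; exists a => //=; rewrite nr_le1. Qed.

Lemma dual_norm_le (phi : A -> Cx R) c : 0 <= c ->
  (forall a, nr (phi a : C) <= c * nr a) -> (dual_norm phi <= c%:E)%E.
Proof.
move=> c0 h; apply: ge_ereal_sup => _ [a /= ha <-]; rewrite lee_fin.
move: ha; rewrite nr_le1 => ha.
apply: le_trans (h a) _; rewrite -[leRHS]mulr1; exact: ler_wpM2l.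
Qed.

Lemma E_lemma (phi : A -> Cx R) (V : set A) v : V v -> nr v <= 1 ->
  ((nr (phi v : C))%:E <= dual_dist phi (annihilator V))%E.
Proof.
move=> Vv v1; apply/ereal_infP => _ [psi [_ psiV] <-].
have := dual_norm_ge (fun a => phi a - psi a) v1.
by rewrite /= psiV // subr0.
Qed.

Lemma nr_scale_inv (s : R) (x : A) : 0 < s -> nr (((s^-1)%:C)%C *: x) = s^-1 * nr x.
Proof. by move=> s0; rewrite nrZ nrC gtr0_norm // invr_gt0. Qed.

Lemma H_lemma (phi : A -> Cx R) (V : set A) (r : R) :
  is_dual phi -> closed_subspace V -> 0 <= r ->
  (forall v, V v -> nr v <= 1 -> nr (phi v : C) <= r) ->
  (dual_dist phi (annihilator V) <= r%:E)%E.
Proof.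
move=> dphi [_ [V0 [VD VZ]]] r0 hb.
have [phD [phZ phC]] := dphi.
have hb' v : V v -> nr (phi v : C) <= r * nr v.
  move=> Vv; have [nv0|nv0] := eqVneq (nr v) 0.
    by rewrite (nr_eq0 nv0) (dual0 dphi) !nr0 mulr0.
  have s0 : 0 < nr v by rewrite lt_neqAle eq_sym nv0 nr_ge0.
  have := hb _ (VZ (((nr v)^-1)%:C)%C _ Vv).
  rewrite nr_scale_inv // mulVf // lexx phZ nrM nrC gtr0_norm ?invr_gt0 //.
  move=> /(_ isT) h.
  by rewrite -ler_pdivrMr // mulrC.
pose G0 := [set p : A * C | V p.1 /\ p.2 = phi p.1].
have cG : cgraph r G0.
  split.
  - by split => //=; rewrite dual0.
  - by move=> x y a b [/= Vx ->] [/= Vy ->]; split => /=; [exact: VD | by rewrite phD].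
  - by move=> k x z [/= Vx ->]; split => /=; [exact: VZ | by rewrite phZ].
  - by move=> x a b [_ /= ->] [_ /= ->].
  - by move=> x z [/= Vx ->]; exact: hb'.
have [psi' [[pD [pZ pC]] pext pb]] := complex_HB r0 cG.
apply: ge_ereal_inf.
exists (dual_norm (fun a => phi a - (phi a - psi' a))).
  exists (fun a => phi a - psi' a); last by [].
  split.
    split; first by move=> a b; rewrite phD pD addrACA opprD.
    split; first by move=> k a; rewrite phZ pZ mulrBr.
    move=> x; apply: continuousB; [exact: phC | exact: pC].
  move=> v Vv; rewrite (pext v (phi v)); first exact: subrr.
  by split.
apply: dual_norm_le => // a.
by rewrite opprB addrCA subrr addr0.
Qed.

End Main.

Section Main2.
Variables (R : realType) (A : normedModType R[i]).
Local Notation C := (R[i]).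

Lemma open_U (phi : A -> Cx R) (r : R) : is_dual phi -> 0 <= r ->
  open [set a | r * nr a < nr (phi a : C)].
Proof.
move=> [_ [_ phC]] r0; rewrite openE => a /= ha.
pose g := nr (phi a : C) - r * nr a.
have g0 : 0 < g by rewrite /g subr_gt0.
pose q := g / (2 * (r + 1)).
have q0 : 0 < q by apply: divr_gt0 => //; apply: mulr_gt0; lra.
have qE : g = 2 * (r * q) + 2 * q.
  by rewrite /q; field; lra.
have hq0 : (0 : C) < (q%:C)%C by rewrite ltcR.
have hg0 : (0 : C) < ((g / 2)%:C)%C by rewrite ltcR; lra.
rewrite /interior; near=> x.
have h1 : `|(phi a : C) - phi x| < ((g / 2)%:C)%C.
  by near: x; apply: (@cvgr_dist_lt _ _ _ (nbhs a) _ phi) => //; exact: phC.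
have h2 : `|a - x| < (q%:C)%C.
  by near: x; apply: (@cvgr_dist_lt _ _ _ (nbhs a) _ id) => //.
move: h1 h2; rewrite !nr_ltE //= => h1 h2.
have t1 : nr (phi a : C) <= nr ((phi a : C) - phi x) + nr (phi x : C).
  by have := nrD ((phi a : C) - phi x) (phi x); rewrite subrK.
have t2 : nr x <= nr a + nr (a - x).
  by have := nrD a (x - a); rewrite addrC subrK -opprB nrN.
have t3 : r * nr (a - x) <= r * q by apply: ler_wpM2l => //; exact: ltW.
have t4 : r * nr x <= r * nr a + r * nr (a - x) by rewrite -mulrDr; exact: ler_wpM2l.
rewrite /g in qE h1; lra.
Unshelve. all: by end_near.
Qed.

Lemma luc_eps (a : A) (eps : R) : locally_uniformly_convex A -> 0 < eps ->
  exists2 k : R, 0 < k & forall u : A,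
    2 * nr a ^+ 2 + 2 * nr u ^+ 2 - nr (a + u) ^+ 2 < k -> nr (a - u) < eps.
Proof.
move=> luc e0.
case: (pselect (exists2 k : R, 0 < k & forall u : A,
    2 * nr a ^+ 2 + 2 * nr u ^+ 2 - nr (a + u) ^+ 2 < k -> nr (a - u) < eps)) => // H.
exfalso.
have hn (n : nat) : exists u : A,
    2 * nr a ^+ 2 + 2 * nr u ^+ 2 - nr (a + u) ^+ 2 < n.+1%:R^-1 /\ eps <= nr (a - u).
  case: (pselect (exists u : A, 2 * nr a ^+ 2 + 2 * nr u ^+ 2 - nr (a + u) ^+ 2 < n.+1%:R^-1
      /\ eps <= nr (a - u))) => // nu; exfalso; apply: H.
  exists (n.+1%:R^-1); first by rewrite invr_gt0 ltr0n.
  move=> u hu; rewrite ltNge; apply/negP => he; apply: nu; by exists u.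
case: (choice hn) => u hu.
pose E n := 2 * nr a ^+ 2 + 2 * nr (u n) ^+ 2 - nr (a + u n) ^+ 2.
have E0 n : 0 <= E n.
  have t1 := nrD a (u n).
  have t2 := nr_ge0 (a + u n).
  have t3 := nr_ge0 a.
  have t4 := nr_ge0 (u n).
  have t5 := ler_pM t2 t2 t1 t1.
  have t6 := sqr_ge0 (nr a - nr (u n)).
  rewrite /E !expr2; rewrite expr2 in t6; nra.
have hc : (fun n => (2 * `|a| ^+ 2 + 2 * `|u n| ^+ 2 - `|a + u n| ^+ 2 : Cx R))
    @ \oo --> (0 : Cx R).
  have -> : (fun n => (2 * `|a| ^+ 2 + 2 * `|u n| ^+ 2 - `|a + u n| ^+ 2 : Cx R))
      = (fun n => ((E n)%:C)%C).
    apply: funext => n; rewrite /E !normE rCB rCD !rCM !expr2.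
    by rewrite (rmorph_nat (real_complex R) 2).
  apply/cvgrPdist_lt => e e0'.
  have eR : 0 < complex.Re e by move: e0'; rewrite ltcE => /andP[].
  near=> n.
  rewrite nr_ltE // sub0r nrN nrC ger0_norm //.
  have [h1 _] := hu n.
  apply: lt_trans h1 _.
  by near: n; exact: (near_infty_natSinv_lt (PosNum eR)).
have hl := luc a u hc.
have eC : (0 : C) < (eps%:C)%C by rewrite ltcR.
have [N _ HN] := @cvgr_dist_lt _ _ _ _ _ _ _ hl _ eC.
have := HN N (leqnn N); rewrite /= nr_ltE // sub0r nrN normE nrC ger0_norm ?nr_ge0 //.
by have [_ h2] := hu N; rewrite ltNge h2.
Unshelve. all: by end_near.
Qed.

End Main2.

Lemma gen_mono (T : Type) (S1 S2 : set (set T)) :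
  S1 `<=` generated_topology S2 -> generated_topology S1 `<=` generated_topology S2.
Proof. by move=> h U hU O tO S2O; apply: hU => // X S1X; exact: h X S1X O tO S2O. Qed.

Lemma gen_eq (T : Type) (S1 S2 : set (set T)) :
  S1 `<=` generated_topology S2 -> S2 `<=` generated_topology S1 ->
  generated_topology S1 = generated_topology S2.
Proof. by move=> h1 h2; apply/seteqP; split; apply: gen_mono. Qed.

Lemma sub_gen (T : Type) (S : set (set T)) : S `<=` generated_topology S.
Proof. by move=> X SX O _ h; exact: h. Qed.

Section Main3.
Variables (R : realType) (A : normedModType R[i]).
Local Notation C := (R[i]).

Lemma dirA : @dual_dist_subbasis R A `<=` generated_topology (@lower_vietoris_subbasis R A).
Proof.
move=> X hX; apply: sub_gen.
move: hX => [phi [r [dphi [r0 ->]]]].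
have [phD [phZ phC]] := dphi.
exists [set a | r * nr a < nr (phi a : C)]; split; first exact: open_U (ltW r0).
apply/seteqP; split => V /=.
- move=> hV.
  case: (pselect (exists v, proj1_sig V v /\ r * nr v < nr (phi v : C))) => [[v [Vv hv]]|nv].
    by exists v.
  exfalso.
  have := H_lemma dphi (proj2_sig V) (ltW r0).
  have hb : forall v, proj1_sig V v -> nr v <= 1 -> nr (phi v : C) <= r.
    move=> v Vv v1; rewrite leNgt; apply/negP => hv; apply: nv; exists v; split => //.
    apply: le_lt_trans hv.
    by have := ler_wpM2l (ltW r0) v1; rewrite mulr1.
  by move=> /(_ hb) h; rewrite ltNge h in hV.
- move=> [v [Vv /= hv]].
  have [_ [_ [_ VZ]]] := proj2_sig V.
  have nv0 : nr v != 0.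
    apply/eqP => h; move: hv; rewrite (nr_eq0 h) (dual0 dphi) !nr0 mulr0.
    by rewrite ltxx.
  have s0 : 0 < nr v by rewrite lt_neqAle eq_sym nv0 nr_ge0.
  pose v' := (((nr v)^-1)%:C)%C *: v.
  have hv1 : nr v' <= 1 by rewrite /v' nr_scale_inv // mulVf.
  have := E_lemma phi (VZ _ _ Vv) hv1.
  rewrite /v' phZ nrM nrC gtr0_norm ?invr_gt0 //.
  apply: lt_le_trans; rewrite lte_fin.
  have : (nr v)^-1 * (nr v * r) < (nr v)^-1 * nr (phi v : C).
    by rewrite ltr_pM2l ?invr_gt0 // mulrC.
  by rewrite mulKf.
Qed.

Lemma dirB : locally_uniformly_convex A ->
  @lower_vietoris_subbasis R A `<=` generated_topology (@dual_dist_subbasis R A).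
Proof.
move=> luc _ [U [Uo ->]] O [OT [OI OU]] Osub.
set X := [set V : MaxA A | (proj1_sig V `&` U) !=set0].
suff key : forall V0, X V0 -> exists Y, [/\ O Y, Y `<=` X & Y V0].
  have -> : X = \bigcup_(Y in [set Y | O Y /\ Y `<=` X]) Y.
    apply/seteqP; split.
    - by move=> V0 /key [Y [OY YX YV]]; exists Y.
    - by move=> V0 [Y [_ YX] YV]; apply: YX.
  by apply: OU => Y [].
move=> V0 [v0 [V0v0 Uv0]].
have [v00|v0n] := eqVneq v0 0.
  exists setT; split => // V _; exists 0; split; last by rewrite -v00.
  by have [_ [h _]] := proj2_sig V.
have m0 : 0 < nr v0.
  by rewrite lt_neqAle nr_ge0 andbT eq_sym; apply/eqP => /nr_eq0; apply/eqP.
pose m := nr v0.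
move: Uo; rewrite openE => /(_ v0 Uv0) /nbhs_ballP [e e0 be].
have eR : 0 < complex.Re e by move: e0; rewrite /= ltcE => /andP[].
have hU x : nr (v0 - x) < complex.Re e -> U x.
  by move=> hx; apply: be; rewrite -ball_normE /ball_ /= nr_ltE.
have [k k0 hk] := luc_eps v0 luc eR.
pose G0 := [set p : A * C | exists kk : C, p = (kk *: v0, kk * (m%:C)%C)].
have cG : cgraph 1 G0.
  split.
  - by exists 0; rewrite scale0r mul0r.
  - move=> x y a b [k1 [-> ->]] [k2 [-> ->]].
    by exists (k1 + k2); rewrite scalerDl mulrDl.
  - move=> kk x z [k1 [-> ->]].
    by exists (kk * k1); rewrite scalerA mulrA.
  - move=> x a b [k1 [E1 ->]] [k2 [E2 ->]].
    suff -> : k1 = k2 by [].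
    apply/eqP; rewrite -subr_eq0; apply/eqP; apply: nr_eq0.
    have : nr ((k1 - k2) *: v0) = 0 by rewrite scalerBl -E1 -E2 subrr nr0.
    rewrite nrZ => /eqP; rewrite mulf_eq0 (gt_eqF m0) orbF => /eqP //.
  - move=> x z [k1 [-> ->]].
    by rewrite nrM nrC nrZ mul1r ger0_norm ?nr_ge0.
have [phi [dphi phext phb]] := complex_HB ler01 cG.
have [phD [phZ phC]] := dphi.
have phv0 : phi v0 = (m%:C)%C.
  by apply: phext; exists 1; rewrite scale1r mul1r.
pose d := Num.min (1/2) (k / (4 * m^+2)).
have m2 : 0 < 4 * m ^+ 2 by rewrite mulr_gt0 // exprn_gt0.
have d0 : 0 < d by rewrite lt_min divr_gt0 //= divr_gt0.
have d1 : d <= 1/2 by rewrite ge_min lexx.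
have d2 : 4 * m ^+ 2 * d <= k.
  have : d <= k / (4 * m ^+ 2) by rewrite ge_min lexx orbT.
  by rewrite ler_pdivlMr // mulrC.
pose r := 1 - d.
have r0 : 0 < r by rewrite /r; lra.
pose Y := [set V : MaxA A | (r%:E < dual_dist phi (annihilator (proj1_sig V)))%E].
exists Y; split.
- by apply: Osub; exists phi, r.
- move=> V hV; rewrite /Y /= in hV.
  have [_ [_ [VD VZ]]] := proj2_sig V.
  case: (pselect (exists w, proj1_sig V w /\ nr w <= 1 /\ r < nr (phi w : C)))
    => [[w [Vw [w1 hw]]]|nw]; last first.
    exfalso.
    have := H_lemma dphi (proj2_sig V) (ltW r0).
    have hb : forall v, proj1_sig V v -> nr v <= 1 -> nr (phi v : C) <= r.
      move=> v Vv v1; rewrite leNgt; apply/negP => hv; apply: nw; exists v; split => //.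
    by move=> /(_ hb) h; rewrite ltNge h in hV.
  have [al [al1 hal]] := unit_rot (phi w : C).
  pose t := nr (phi w : C).
  pose w' := ((m%:C)%C * al) *: w.
  have Vw' : proj1_sig V w' by exact: VZ.
  have phw' : phi w' = ((m * t)%:C)%C by rewrite /w' phZ -mulrA hal rCM.
  have nw' : nr w' <= m.
    rewrite /w' nrZ nrM al1 nrC mulr1 ger0_norm ?nr_ge0 //.
    by have := ler_wpM2l (nr_ge0 v0) w1; rewrite mulr1.
  have nw0 : 0 <= nr w' := nr_ge0 w'.
  have hP : m + m * t <= nr (v0 + w').
    have := phb (v0 + w'); rewrite phD phv0 phw' -rCD nrC mul1r ger0_norm //.
    by apply: addr_ge0; [exact: nr_ge0 | apply: mulr_ge0; exact: nr_ge0].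
  have hQ : m * (2 - d) < m + m * t.
    have : m * (1 - d) < m * t by rewrite ltr_pM2l.
    lra.
  have hQ0 : 0 < m * (2 - d) by apply: mulr_gt0 => //; lra.
  have hPP : (m * (2 - d)) * (m * (2 - d)) < nr (v0 + w') * nr (v0 + w').
    have h := lt_le_trans hQ hP.
    apply: (@lt_le_trans _ _ ((m * (2 - d)) * nr (v0 + w'))).
      by rewrite ltr_pM2l.
    by rewrite ler_pM2r //; [exact: ltW | exact: lt_trans h].
  have hWW : nr w' * nr w' <= m * m by apply: ler_pM.
  have hexp : 2 * nr v0 ^+ 2 + 2 * nr w' ^+ 2 - nr (v0 + w') ^+ 2 < k.
    rewrite -/m !expr2; rewrite expr2 in d2.
    have hdd : 0 <= m * m * (d * d) by apply: mulr_ge0; apply: mulr_ge0; lra.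
    nra.
  exists w'; split => //; apply: hU; exact: hk.
- have [_ [_ [_ VZ]]] := proj2_sig V0.
  pose v := ((m^-1)%:C)%C *: v0.
  have hv1 : nr v <= 1 by rewrite /v nr_scale_inv // mulVf // gt_eqF.
  have := E_lemma phi (VZ _ _ V0v0) hv1.
  rewrite /v phZ phv0 -rCM mulVf ?gt_eqF // nrC normr1.
  by apply: lt_le_trans; rewrite lte_fin /r; lra.
Qed.

End Main3.

Theorem lemma7p23 (R : realType) (A : normedModType R[i]) :
  @locally_uniformly_convex R A ->
  generated_topology (@lower_vietoris_subbasis R A) =
  generated_topology (@dual_dist_subbasis R A).
Proof.
move=> luc; apply: gen_eq; [exact: dirB | exact: dirA].
Qed.
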